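(* Let $1 \to N \xrightarrow{i} G \xrightarrow{p} Q \to 1$ be a short exact sequence of groups, where $Q$ is arbitrary and $\nu(N) = 0$. Then $\nu(G) \le \nu(Q)$, with equality if the extension is split or central.
   Context: For a group $G$, the free subgroup rank is $\nu(G) = \max\{ n \ge 0 : (F_2)^n \text{ embeds into } G\} \in \mathbb{N}_0 \cup \{\infty\}$, where $F_2$ is the free group of rank two and $(F_2)^n$ is the $n$-fold direct product. The extension is central if $i(N)$ lies in the center of $G$, and split if $p$ admits a homomorphic section $Q \to G$. *)

(* Defs.v *)
From mathcomp Require Import all_boot.
From Stdlib Require Import ClassicalEpsilon FunctionalExtensionality.

Set Implicit Arguments.
Unset Strict Implicit.
Unset Printing Implicit Defensive.

Record group := Group {
  carrier :> Type;
  gmul : carrier -> carrier -> carrier;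
  gone : carrier;
  ginv : carrier -> carrier;
  gmulA : forall x y z, gmul x (gmul y z) = gmul (gmul x y) z;
  gmul1g : forall x, gmul gone x = x;
  gmulVg : forall x, gmul (ginv x) x = gone }.

Arguments gmul {g}.
Arguments gone {g}.
Arguments ginv {g}.

Definition is_hom (G H : group) (f : G -> H) : Prop :=
  forall x y, f (gmul x y) = gmul (f x) (f y).

Definition short_exact (N G Q : group) (i : N -> G) (p : G -> Q) : Prop :=
  [/\ is_hom i, is_hom p, injective i,
      (forall q : Q, exists g : G, p g = q) &
      (forall g : G, p g = gone <-> exists n : N, i n = g)].

Definition central_ext (N G : group) (i : N -> G) : Prop :=
  forall (n : N) (g : G), gmul (i n) g = gmul g (i n).

Definition split_ext (G Q : group) (p : G -> Q) : Prop :=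
  exists s : Q -> G, is_hom s /\ forall q, p (s q) = q.

(* The free group F_2 on two generators, as freely reduced words.      *)
(* A letter is (generator, inverted?).                                *)
Definition letter := (bool * bool)%type.
Definition linv (x : letter) : letter := (x.1, ~~ x.2).

Fixpoint reduced (w : seq letter) : bool :=
  match w with
  | x :: ((y :: _) as w') => (y != linv x) && reduced w'
  | _ => true
  end.

Definition cr (x : letter) (w : seq letter) : seq letter :=
  match w with
  | y :: w' => if y == linv x then w' else x :: w
  | [::] => [:: x]
  end.

Definition wmul (u v : seq letter) : seq letter := foldr cr v u.
Definition winv (u : seq letter) : seq letter := wmul (rev (map linv u)) [::].

Lemma linvK (x : letter) : linv (linv x) = x.
Proof. by case: x => a b; rewrite /linv /= negbK. Qed.

Lemma reduced_cr x w : reduced w -> reduced (cr x w).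
Proof.
case: w => [|y w] //= Hw.
case: ifP => Hy; first by case: w Hw => [|z w] // /andP[].
by rewrite /= Hy Hw.
Qed.

Lemma reduced_wmul u v : reduced v -> reduced (wmul u v).
Proof. by elim: u => [|x u IH] //= Hv; apply: reduced_cr; apply: IH. Qed.

Lemma reduced_tail x w : reduced (x :: w) -> reduced w.
Proof. by case: w => [|y w] //= /andP[]. Qed.

Lemma cr_cancel x w : reduced w -> cr x (cr (linv x) w) = w.
Proof.
case: w => [|y w] /=; first by rewrite eqxx.
case: ifP => [/eqP -> | Hy] Hw.
  rewrite linvK; case: w Hw => [|z w] //=.
  by rewrite linvK => /andP[Hz _]; rewrite (negbTE Hz).
by rewrite /= eqxx.
Qed.

Lemma wmul_cr x v w : reduced v -> reduced w ->
  wmul (cr x v) w = cr x (wmul v w).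
Proof.
case: v => [|y v] //= Hv Hw.
case: ifP => [/eqP -> | _] //=.
by rewrite cr_cancel //; apply: reduced_wmul.
Qed.

Lemma wmulA u v w : reduced v -> reduced w ->
  wmul u (wmul v w) = wmul (wmul u v) w.
Proof.
move=> Hv Hw; elim: u => [|x u IH] //=.
by rewrite wmul_cr ?IH //; apply: reduced_wmul.
Qed.

Lemma wmulV u : reduced u -> wmul (winv u) u = [::].
Proof.
move=> Hu; rewrite /winv -wmulA //.
elim: u Hu => [|x u IH] Hu //=.
rewrite rev_cons /wmul foldr_rcons /= linvK eqxx.
by apply: IH; apply: reduced_tail Hu.
Qed.

Definition F2T := {w : seq letter | reduced w}.

Definition F2mul (u v : F2T) : F2T :=
  exist _ (wmul (sval u) (sval v)) (reduced_wmul (sval u) (svalP v)).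
Definition F2one : F2T := exist _ [::] isT.
Definition F2inv (u : F2T) : F2T :=
  exist _ (winv (sval u)) (reduced_wmul _ (isT : reduced [::])).

Lemma F2_eq (u v : F2T) : sval u = sval v -> u = v.
Proof.
case: u v => [u pu] [v pv] /= E; subst v.
by rewrite (eq_irrelevance pu pv).
Qed.

Lemma F2mulA (x y z : F2T) : F2mul x (F2mul y z) = F2mul (F2mul x y) z.
Proof. by apply: F2_eq; rewrite /= (wmulA _ (svalP y) (svalP z)). Qed.

Lemma F2mul1 (x : F2T) : F2mul F2one x = x.
Proof. by apply: F2_eq. Qed.

Lemma F2mulV (x : F2T) : F2mul (F2inv x) x = F2one.
Proof. by apply: F2_eq; rewrite /= (wmulV (svalP x)). Qed.

Definition F2 : group := Group F2mulA F2mul1 F2mulV.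

Section Power.
Variables (H : group) (n : nat).
Definition pmul (f g : 'I_n -> H) : 'I_n -> H := fun k => gmul (f k) (g k).
Definition pone : 'I_n -> H := fun _ => gone.
Definition pinv (f : 'I_n -> H) : 'I_n -> H := fun k => ginv (f k).
Lemma pmulA f g h : pmul f (pmul g h) = pmul (pmul f g) h.
Proof. by apply: functional_extensionality => k; rewrite /pmul gmulA. Qed.
Lemma pmul1 f : pmul pone f = f.
Proof. by apply: functional_extensionality => k; rewrite /pmul gmul1g. Qed.
Lemma pmulV f : pmul (pinv f) f = pone.
Proof. by apply: functional_extensionality => k; rewrite /pmul gmulVg. Qed.
Definition gpower : group := Group pmulA pmul1 pmulV.
End Power.

Definition embeds (n : nat) (G : group) : Prop :=
  exists f : gpower F2 n -> G, is_hom f /\ injective f.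

(* Free subgroup rank nu(G) in N_0 \cup {oo}; None encodes oo.         *)
Definition is_nu (G : group) (x : option nat) : Prop :=
  match x with
  | Some n => embeds n G /\ (forall m, embeds m G -> m <= n)
  | None => forall n, exists m, n <= m /\ embeds m G
  end.

Definition nu (G : group) : option nat := epsilon (inhabits None) (is_nu G).

Definition le_enat (x y : option nat) : Prop :=
  match x, y with
  | _, None => True
  | None, Some _ => False
  | Some a, Some b => a <= b
  end.

(* Main.v *)
Require Import Defs.
From mathcomp Require Import all_boot.
From Stdlib Require Import ClassicalEpsilon FunctionalExtensionality Classical.

Set Implicit Arguments.
Unset Strict Implicit.
Unset Printing Implicit Defensive.

Section GroupLemmas.
Variable G : group.
Implicit Types x y z : G.

Lemma gmulgV x : gmul x (ginv x) = gone.
Proof.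
have Hy : gmul (gmul x (ginv x)) (gmul x (ginv x)) = gmul x (ginv x).
  by rewrite -gmulA (gmulA (ginv x)) gmulVg gmul1g.
rewrite -[LHS]gmul1g -(gmulVg (gmul x (ginv x))) -gmulA Hy.
by rewrite gmulVg.
Qed.

Lemma gmulg1 x : gmul x gone = x.
Proof. by rewrite -(gmulVg x) gmulA gmulgV gmul1g. Qed.

Lemma gmulKg x y : gmul (ginv x) (gmul x y) = y.
Proof. by rewrite gmulA gmulVg gmul1g. Qed.

Lemma gmulVKg x y : gmul x (gmul (ginv x) y) = y.
Proof. by rewrite gmulA gmulgV gmul1g. Qed.

Lemma gmulI x y z : gmul x y = gmul x z -> y = z.
Proof. by move=> H; rewrite -(gmulKg x y) H gmulKg. Qed.

Lemma ginv_uniq x y : gmul x y = gone -> x = ginv y.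
Proof.
by move=> H; rewrite -[x]gmulg1 -(gmulgV y) gmulA H gmul1g.
Qed.

Lemma ginvK x : ginv (ginv x) = x.
Proof. by apply/esym/ginv_uniq; rewrite gmulgV. Qed.

Lemma ginv1 : ginv (gone : G) = gone.
Proof. by apply/esym/ginv_uniq; rewrite gmul1g. Qed.

Lemma ginvM x y : ginv (gmul x y) = gmul (ginv y) (ginv x).
Proof.
apply/esym/ginv_uniq.
by rewrite -gmulA (gmulA (ginv x)) gmulVg gmul1g gmulVg.
Qed.

Lemma gdiv1 x y : gmul x (ginv y) = gone -> x = y.
Proof. by move=> /ginv_uniq; rewrite ginvK. Qed.

End GroupLemmas.

Definition comm (G : group) (x y : G) : G :=
  gmul (ginv x) (gmul (ginv y) (gmul x y)).

Section Hom.
Variables (G H : group) (f : G -> H) (hf : is_hom f).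

Lemma hom1 : f gone = gone.
Proof.
apply: (@gmulI _ (f gone)); rewrite -hf gmul1g gmulg1 //.
Qed.

Lemma homV x : f (ginv x) = ginv (f x).
Proof. by apply: ginv_uniq; rewrite -hf gmulVg hom1. Qed.

Lemma hom_comm x y : f (comm x y) = comm (f x) (f y).
Proof. by rewrite /comm !hf !homV. Qed.

Lemma hom_inj : (forall x, f x = gone -> x = gone) -> injective f.
Proof.
move=> K x y E; apply: gdiv1; apply: K.
by rewrite hf homV E gmulgV.
Qed.
End Hom.

Lemma hom_comp (G H K : group) (f : G -> H) (g : H -> K) :
  is_hom f -> is_hom g -> is_hom (g \o f).
Proof. by move=> hf hg x y /=; rewrite hf hg. Qed.

Lemma embeds0 G : embeds 0 G.
Proof.
exists (fun _ => gone); split.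
  by move=> x y; rewrite gmul1g.
move=> x y _; apply: functional_extensionality => -[k hk] //.
Qed.

Lemma is_nu_ex G : exists x, is_nu G x.
Proof.
case: (classic (forall n, exists m, n <= m /\ embeds m G)) => H.
  by exists None.
have [n Hn] := not_all_ex_not _ _ H.
have Hb : forall m, embeds m G -> m < n.
  move=> m Em; rewrite ltnNge; apply/negP => Hle; apply: Hn; by exists m.
elim: n {H Hn} Hb => [|n IH] Hb.
  by have := Hb 0 (embeds0 G).
case: (classic (embeds n G)) => En.
  exists (Some n); split => // m /Hb; by rewrite ltnS.
apply: IH => m Em; have := Hb m Em; rewrite ltnS leq_eqVlt.
by case/orP => // /eqP E; subst m.
Qed.

Lemma nuP G : is_nu G (nu G).
Proof.
rewrite /nu; apply: epsilon_spec; exact: is_nu_ex.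
Qed.

Lemma is_nu_uniq G x y : is_nu G x -> is_nu G y -> x = y.
Proof.
case: x => [a|]; case: y => [b|] //=.
- move=> [Ea Ha] [Eb Hb]; congr Some; apply/eqP; rewrite eqn_leq.
  by rewrite Ha // Hb.
- move=> [Ea Ha] H; have [m [Hm Em]] := H a.+1.
  by have := Ha _ Em; rewrite leqNgt Hm.
- move=> H [Eb Hb]; have [m [Hm Em]] := H b.+1.
  by have := Hb _ Em; rewrite leqNgt Hm.
Qed.

Lemma nu_le G H : (forall n, embeds n G -> embeds n H) -> le_enat (nu G) (nu H).
Proof.
move=> GH; have := nuP G; have := nuP H.
case: (nu G) => [a|]; case: (nu H) => [b|] //=.
- by move=> [Eb Hb] [Ea Ha]; apply: Hb; apply: GH.
- move=> [Eb Hb] HG; have [m [Hm Em]] := HG b.+1.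
  by have := Hb _ (GH _ Em); rewrite leqNgt Hm.
Qed.

Lemma nu_eq G H : (forall n, embeds n G <-> embeds n H) -> nu G = nu H.
Proof.
move=> GH; apply: (@is_nu_uniq H); last exact: nuP.
have := nuP G; case: (nu G) => [a|] /=.
  move=> [Ea Ha]; split; first by apply/GH.
  by move=> m /GH; apply: Ha.
move=> HG n; have [m [Hm Em]] := HG n; exists m; split => //; exact/GH.
Qed.
Definition x0 : letter := (false, false).
Definition junc (a b : seq letter) : bool := head x0 b != linv (last x0 a).
Definition nrel (x y : letter) : bool := y != linv x.

Lemma reduced_cons2 x y w : reduced (x :: y :: w) = (y != linv x) && reduced (y :: w).
Proof. by []. Qed.

Lemma reduced_sorted w : reduced w = sorted nrel w.
Proof.
elim: w => [|x w IH] //; case: w IH => [|y w] // IH.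
by rewrite reduced_cons2 IH.
Qed.

Lemma reduced_cat a b : a != [::] -> b != [::] ->
  reduced (a ++ b) = [&& reduced a, reduced b & junc a b].
Proof.
case: b => [|y b]; first by move=> _ /eqP.
case: a => [|x a]; first by move=> /eqP.
move=> _ _; elim: a x => [|x' a IH] x.
  by rewrite cat1s reduced_cons2 /junc /= andbC.
rewrite cat_cons reduced_cons2 IH reduced_cons2 /junc /=.
by rewrite !andbA.
Qed.

Lemma reduced_catr a b : reduced (a ++ b) -> reduced b.
Proof. by elim: a => [|x a IH] //= /reduced_tail. Qed.

Lemma reduced_catl a b : reduced (a ++ b) -> reduced a.
Proof.
case: b => [|y b]; first by rewrite cats0.
case: a => [|x a] // H; by move: H; rewrite reduced_cat // => /andP[].
Qed.

Lemma junc_catr a b c : b != [::] -> junc a (b ++ c) = junc a b.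
Proof. by case: b. Qed.

Lemma junc_catl a b c : c != [::] -> junc (a ++ c) b = junc c b.
Proof. by case: c => // y c _; rewrite /junc last_cat. Qed.

Lemma reduced_flatten (P : seq (seq letter)) :
  all (fun p => (p != [::]) && reduced p) P -> sorted junc P ->
  reduced (flatten P).
Proof.
elim: P => [|p P IH] //; case: P IH => [|q P] IH.
  by rewrite /= cats0 => /andP[/andP[]].
move=> HA HS.
have Hr : reduced (flatten (q :: P)).
  by apply: IH; [case/andP: HA | case/andP: HS].
case/andP: HA => /andP[p0 rp] /andP[/andP[q0 _] _].
case/andP: HS => jpq _.
rewrite [flatten _]/= reduced_cat //; last by move: q0; case: (q).

by rewrite rp Hr /= junc_catr.
Qed.

Lemma cr_red x w : reduced (x :: w) -> cr x w = x :: w.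
Proof. by case: w => [|y w] //= /andP[/negbTE ->]. Qed.

Lemma wmul_cat u v : reduced (u ++ v) -> wmul u v = u ++ v.
Proof.
elim: u => [|x u IH] //= H.
by rewrite IH ?cr_red //; apply: reduced_tail H.
Qed.

Definition rvl (w : seq letter) := rev (map linv w).

Lemma rvl_cons x w : rvl (x :: w) = rcons (rvl w) (linv x).
Proof. by rewrite /rvl /= rev_cons. Qed.

Lemma linv_eq x y : (linv x == y) = (x == linv y).
Proof.
by apply/eqP/eqP => [<-|->]; rewrite linvK.
Qed.

Lemma head_rvl w : w != [::] -> head x0 (rvl w) = linv (last x0 w).
Proof.
case: w => [|x w] // _; rewrite /rvl /= rev_cons.
elim/last_ind: w => [|w y _] //=; rewrite ?last_rcons map_rcons rev_rcons //.
Qed.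

Lemma last_rvl w : w != [::] -> last x0 (rvl w) = linv (head x0 w).
Proof. by case: w => [|x w] // _; rewrite rvl_cons last_rcons. Qed.

Lemma rvl_nil w : (rvl w == [::]) = (w == [::]).
Proof. by case: w => // x w; rewrite rvl_cons; case: (rvl w). Qed.

Lemma reduced_rvl w : reduced w -> reduced (rvl w).
Proof.
elim: w => [|x w IH] // H; rewrite rvl_cons -cats1.
case: w IH H => [|y w] IH H //.
rewrite reduced_cat ?rvl_nil //= IH ?(reduced_tail H) //.
rewrite /junc /= last_rvl //=.
move: H => /= /andP[H _]; by rewrite linvK eq_sym.
Qed.

Lemma rvlK w : rvl (rvl w) = w.
Proof. by rewrite /rvl map_rev revK -map_comp (eq_map linvK) map_id. Qed.

Lemma sval_mul (u v : F2) : reduced (sval u ++ sval v) ->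
  sval (F2mul u v) = sval u ++ sval v.
Proof. by move=> H; rewrite /= wmul_cat. Qed.

Lemma sval_inv (u : F2) : sval (F2inv u) = rvl (sval u).
Proof.
rewrite /= /winv wmul_cat cats0 //; exact: reduced_rvl (svalP u).
Qed.

Definition gen (x : letter) : F2 := exist _ [:: x] isT.

Lemma F2_decomp x w (H : reduced (x :: w)) :
  (exist _ (x :: w) H : F2) = F2mul (gen x) (exist _ w (reduced_tail H)).
Proof. by apply: F2_eq => /=; rewrite cr_red. Qed.

Lemma F2_ind (P : F2 -> Prop) : P gone ->
  (forall x (y : F2), P y -> P (gmul (gen x) y)) -> forall x, P x.
Proof.
move=> P1 PS [w Hw]; elim: w Hw => [|x w IH] Hw.
  by have -> : (exist _ [::] Hw : F2) = gone by apply: F2_eq.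
by rewrite F2_decomp; apply: PS; apply: IH.
Qed.

Lemma F2inv_gen x : ginv (gen x : F2) = gen (linv x).
Proof. by apply: F2_eq. Qed.
Section Free.
Variables (H : group) (A B : H).

Definition img (x : letter) : H :=
  let e := if x.1 then B else A in if x.2 then ginv e else e.

Lemma img_linv x : img (linv x) = ginv (img x).
Proof. by case: x => [[] []]; rewrite /img /= ?ginvK. Qed.

Definition Lf (w : seq letter) : H := foldr (fun x acc => gmul (img x) acc) gone w.

Lemma Lf_cr x w : Lf (cr x w) = gmul (img x) (Lf w).
Proof.
case: w => [|y w] //=; case: ifP => // /eqP ->.
by rewrite img_linv gmulVKg.
Qed.

Lemma Lf_wmul u v : Lf (wmul u v) = gmul (Lf u) (Lf v).
Proof.
elim: u => [|x u IH] /=; first by rewrite gmul1g.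
by rewrite Lf_cr IH gmulA.
Qed.

Definition fext (u : F2) : H := Lf (sval u).

Lemma fext_hom : is_hom fext.
Proof. by move=> x y; rewrite /fext /= Lf_wmul. Qed.

Lemma fext_gen x : fext (gen x) = img x.
Proof. by rewrite /fext /= gmulg1. Qed.
End Free.

Lemma hom_agree (H : group) (f g : F2 -> H) : is_hom f -> is_hom g ->
  (forall b, f (gen (b, false)) = g (gen (b, false))) -> forall x, f x = g x.
Proof.
move=> hf hg E; apply: F2_ind; first by rewrite !hom1.
move=> [b s] y IH; rewrite hf hg IH; congr gmul.
case: s; last exact: E.
have -> : gen (b, true) = ginv (gen (b, false)) by rewrite F2inv_gen.
by rewrite !homV // E.
Qed.

Lemma F2_trivial (H : group) (f : F2 -> H) : is_hom f ->
  (forall b, f (gen (b, false)) = gone) -> forall x, f x = gone.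
Proof.
move=> hf E x; apply: (@hom_agree H f (fun _ => gone)) => //.
by move=> ? ?; rewrite gmul1g.
Qed.

Definition L4 : seq letter := [:: (false,false); (false,true); (true,false); (true,true)].
Lemma mem_L4 x : x \in L4.
Proof. by case: x => [[] []]. Qed.

Definition ends (hu lu hv lv : letter) (x : letter) : letter * letter :=
  match x with
  | (false, false) => (hu, lu)
  | (false, true) => (linv lu, linv hu)
  | (true, false) => (hv, lv)
  | (true, true) => (linv lv, linv hv)
  end.

Definition cond4 hu lu hv lv : bool :=
  all (fun a => all (fun b => (b != linv a) ==>
     ((ends hu lu hv lv b).1 != linv (ends hu lu hv lv a).2)) L4) L4.

Lemma winv_rvl w : reduced w -> winv w = rvl w.
Proof. by move=> rw; rewrite /winv wmul_cat ?cats0 //; apply: reduced_rvl. Qed.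

Lemma block_inj (u v : F2) : sval u != [::] -> sval v != [::] ->
  cond4 (head x0 (sval u)) (last x0 (sval u)) (head x0 (sval v)) (last x0 (sval v)) ->
  injective (fext u v).
Proof.
move=> u0 v0 C.
pose Bl a := sval (img u v a).
have ru := svalP u; have rv := svalP v.
have Bne a : Bl a != [::].
  by case: a => [[] []]; rewrite /Bl /img /= ?winv_rvl ?rvl_nil.
have Bends a : (head x0 (Bl a), last x0 (Bl a)) =
   ends (head x0 (sval u)) (last x0 (sval u)) (head x0 (sval v)) (last x0 (sval v)) a.
  by case: a => [[] []]; rewrite /Bl /img /= ?winv_rvl ?head_rvl ?last_rvl.
have J a b : b != linv a -> junc (Bl a) (Bl b).
  move=> hab; move/allP: C => /(_ a (mem_L4 a)) /allP /(_ b (mem_L4 b)).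
  rewrite hab /= /junc; move: (Bends a) (Bends b).
  case: (ends _ _ _ _ a) => ha la; case: (ends _ _ _ _ b) => hb lb.
  by case=> _ -> [-> _].
have key w : reduced w -> reduced (flatten (map Bl w)) /\
                         sval (Lf u v w) = flatten (map Bl w).
  move=> rw; have rf : reduced (flatten (map Bl w)).
    apply: reduced_flatten.
      by apply/allP => p /mapP [a _ ->]; rewrite Bne /Bl (svalP (img u v a)).
    rewrite sorted_map; move: rw; rewrite reduced_sorted.
    by apply: sub_sorted => a b /J.
  split => //; elim: w rw rf => [|a w IH] //= rw rf.
  rewrite wmul_cat IH //; try exact: reduced_tail rw; exact: reduced_catr rf.
apply: hom_inj; first exact: fext_hom.
move=> [w rw] /= E; apply: F2_eq => /=.
have [_ E2] := key w rw; move: E; rewrite /fext /= => E.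
have : flatten (map Bl w) = [::] by rewrite -E2 E.
by case: w {rw E E2} => [|a w] //=; move: (Bne a); case: (Bl a).
Qed.
Lemma comm_gone (G : group) (a b : G) : comm a b = gone -> gmul a b = gmul b a.
Proof.
move=> E; have : gmul (gmul b a) (comm a b) = gmul a b.
  by rewrite /comm -gmulA gmulVKg gmulVKg.
by rewrite E gmulg1 => ->.
Qed.

Lemma comm_x1 (G : group) (a : G) : comm a gone = gone.
Proof. by rewrite /comm ginv1 gmul1g gmulg1 gmulVg. Qed.

Lemma comm_1x (G : group) (a : G) : comm gone a = gone.
Proof. by rewrite /comm ginv1 gmul1g gmul1g gmulVg. Qed.

Lemma commV (G : group) (a b : G) : gmul a b = gmul b a ->
  gmul a (ginv b) = gmul (ginv b) a.
Proof.
move=> E; apply: (@gmulI _ b); rewrite gmulVKg gmulA -E -gmulA gmulgV gmulg1 //.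
Qed.

Lemma piece_gone (G : group) (a b c : G) : gmul a b = gmul b a -> gmul a c = gmul c a ->
  gmul (ginv b) (gmul a (gmul b (gmul (ginv c) (gmul (ginv a) c)))) = gone.
Proof.
move=> Eb Ec.
rewrite (gmulA a b) Eb -gmulA gmulKg (gmulA a) (commV Ec) -gmulA gmulVKg gmulVg //.
Qed.

Lemma sval_gmul (u v : F2) : reduced (sval u ++ sval v) ->
  sval (gmul u v) = sval u ++ sval v.
Proof. exact: sval_mul. Qed.

Definition piece (w T S : F2) : F2 :=
  gmul (ginv T) (gmul w (gmul T (gmul (ginv S) (gmul (ginv w) S)))).

Lemma sval_piece (w T S : F2) :
  reduced (flatten [:: rvl (sval T); sval w; sval T; rvl (sval S); rvl (sval w); sval S]) ->
  sval (piece w T S) = flatten [:: rvl (sval T); sval w; sval T; rvl (sval S); rvl (sval w); sval S].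
Proof.
rewrite /= cats0 => H.
have H1 := reduced_catr H; have H2 := reduced_catr H1; have H3 := reduced_catr H2.
have H4 := reduced_catr H3.
have rw := svalP w; have rT := svalP T; have rS := svalP S.
rewrite /piece /= !winv_rvl //.
rewrite (@wmul_cat _ _ H4) (@wmul_cat _ _ H3) (@wmul_cat _ _ H2).
by rewrite (@wmul_cat _ _ H1) (@wmul_cat _ _ H).
Qed.
Definition goodTS (f l : letter) (p : seq letter * seq letter) : bool :=
  [&& p.1 != [::], reduced p.1, p.2 != [::], reduced p.2 &
   sorted junc [:: rvl p.1; [:: f; l]; p.1; rvl p.2; [:: linv l; linv f]; p.2]].

Definition good f l (q : (seq letter * seq letter) * (seq letter * seq letter)) : bool :=
  [&& goodTS f l q.1, goodTS f l q.2 &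
   cond4 (head x0 (rvl q.1.1)) (last x0 q.1.2) (head x0 (rvl q.2.1)) (last x0 q.2.2)].

Definition choose_q (f l : letter) : (seq letter * seq letter) * (seq letter * seq letter) :=
  match f, l with
  | (false,false), (false,false) => (([:: (true,false)], [:: (true,true)]), ([:: (true,false); (false,false)], [:: (true,false); (false,true)]))
  | (false,false), (false,true) => (([:: (false,true)], [:: (true,false)]), ([:: (true,true)], [:: (true,false); (false,false)]))
  | (false,false), (true,false) => (([:: (false,true)], [:: (true,false)]), ([:: (false,true); (true,true)], [:: (true,false); (false,false)]))
  | (false,false), (true,true) => (([:: (false,true)], [:: (true,true)]), ([:: (false,true); (true,false)], [:: (true,true); (false,false)]))
  | (false,true), (false,false) => (([:: (false,false)], [:: (true,false)]), ([:: (true,true)], [:: (true,false); (false,true)]))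
  | (false,true), (false,true) => (([:: (true,false)], [:: (true,true)]), ([:: (true,false); (false,false)], [:: (true,false); (false,true)]))
  | (false,true), (true,false) => (([:: (false,false)], [:: (true,false)]), ([:: (false,false); (true,true)], [:: (true,false); (false,true)]))
  | (false,true), (true,true) => (([:: (false,false)], [:: (true,true)]), ([:: (false,false); (true,false)], [:: (true,true); (false,true)]))
  | (true,false), (false,false) => (([:: (false,false)], [:: (true,true)]), ([:: (false,false); (true,false)], [:: (true,true); (false,true)]))
  | (true,false), (false,true) => (([:: (false,true)], [:: (true,true)]), ([:: (false,true); (true,false)], [:: (true,true); (false,false)]))
  | (true,false), (true,false) => (([:: (false,false)], [:: (false,true)]), ([:: (false,false); (true,false)], [:: (false,false); (true,true)]))
  | (true,false), (true,true) => (([:: (false,false)], [:: (false,true)]), ([:: (true,true)], [:: (false,false); (true,false)]))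
  | (true,true), (false,false) => (([:: (false,false)], [:: (true,false)]), ([:: (false,false); (true,true)], [:: (true,false); (false,true)]))
  | (true,true), (false,true) => (([:: (false,true)], [:: (true,false)]), ([:: (false,true); (true,true)], [:: (true,false); (false,false)]))
  | (true,true), (true,false) => (([:: (false,false)], [:: (false,true)]), ([:: (true,false)], [:: (false,false); (true,true)]))
  | (true,true), (true,true) => (([:: (false,false)], [:: (false,true)]), ([:: (false,false); (true,false)], [:: (false,false); (true,true)]))
  end.

Lemma good_choose f l : good f l (choose_q f l).
Proof.
by case: f l => [[] []] [[] []]; vm_compute.
Qed.
Definition E (n : nat) (j : 'I_n) (t : F2) : gpower F2 n :=
  fun m => if m == j then t else gone.

Lemma E_hom n (j : 'I_n) : is_hom (E j).
Proof.
move=> x y; apply: functional_extensionality => m.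
rewrite /E /= /pmul; case: (m == j) => //; exact: (esym (gmul1g (gone : F2))).
Qed.

Lemma E_inj n (j : 'I_n) : injective (E j).
Proof. by move=> x y /(congr1 (fun f => f j)); rewrite /E eqxx. Qed.

Lemma sorted_piece_w (w T S : seq letter) : w != [::] ->
  sorted junc [:: rvl T; w; T; rvl S; rvl w; S] =
  sorted junc [:: rvl T; [:: head x0 w; last x0 w]; T; rvl S;
                  [:: linv (last x0 w); linv (head x0 w)]; S].
Proof. by move=> w0; rewrite /= /junc (head_rvl w0) (last_rvl w0). Qed.

Lemma head_flat (a : seq letter) P : a != [::] -> head x0 (flatten (a :: P)) = head x0 a.
Proof. by case: a. Qed.

Lemma last_flat6 (a b c d e g : seq letter) : g != [::] ->
  last x0 (flatten [:: a; b; c; d; e; g]) = last x0 g.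
Proof. by case: g => // y g _; rewrite /= cats0 !last_cat. Qed.

Lemma kernel_free n (Q : group) (h : gpower F2 n -> Q) : is_hom h ->
  forall k : gpower F2 n, h k = gone -> k <> gone ->
  exists phi : F2 -> gpower F2 n, [/\ is_hom phi, injective phi &
      forall x, h (phi x) = gone].
Proof.
move=> hh k hk k1.
have [j kj] : exists j, k j <> gone.
  apply: NNPP => H; apply: k1; apply: functional_extensionality => m.
  by apply: NNPP => Hm; apply: H; exists m.
set w := k j in kj.
have w0 : sval w != [::].
  apply/eqP => E0; apply: kj; apply: F2_eq; by rewrite E0.
pose H := h \o E j.
have hH : is_hom H by apply: hom_comp; [exact: E_hom | exact: hh].
have Hc T : gmul (H w) (H T) = gmul (H T) (H w).
  apply: comm_gone; rewrite -(hom_comm hH) /H /=.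
  have -> : E j (comm w T) = comm k (E j T).
    apply: functional_extensionality => m; rewrite /E /comm /= /pmul /pinv.
    case: eqP => [->|_] //; exact: (esym (@comm_x1 F2 (k m))).
  by rewrite (hom_comm hh) hk comm_1x.
set f := head x0 (sval w); set l := last x0 (sval w).
have G := good_choose f l.
case: (choose_q f l) G => [[T S] [T2 S2]] /and3P[G1 G2 C].
pose mk (s : seq letter) : F2 := insubd (gone : F2) s.
have mkE s : reduced s -> sval (mk s) = s.
  by move=> rs; rewrite /mk val_insubd rs.
have Pc (A B : seq letter) : goodTS f l (A, B) ->
   [/\ reduced (sval (piece w (mk A) (mk B))),
       sval (piece w (mk A) (mk B)) != [::],
       head x0 (sval (piece w (mk A) (mk B))) = head x0 (rvl A) &
       last x0 (sval (piece w (mk A) (mk B))) = last x0 B].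
  case/and5P => A0 rA B0 rB SJ; simpl in A0, rA, B0, rB, SJ.
  have rw := svalP w.
  have RF : reduced (flatten [:: rvl (sval (mk A)); sval w; sval (mk A);
                rvl (sval (mk B)); rvl (sval w); sval (mk B)]).
    rewrite !mkE //; apply: reduced_flatten.
      by rewrite /= !rvl_nil A0 B0 w0 rA rB rw !reduced_rvl.
    by rewrite sorted_piece_w.
  rewrite sval_piece // !mkE //; rewrite !mkE // in RF.
  split => //.
  - by move: A0; rewrite -(rvl_nil A) /=; case: (rvl A).
  - by rewrite head_flat ?rvl_nil.
  - by rewrite last_flat6.
have [ru u0 hu lu] := Pc _ _ G1.
have [rv v0 hv lv] := Pc _ _ G2.
set u := piece w (mk T) (mk S) in ru u0 hu lu.
set v := piece w (mk T2) (mk S2) in rv v0 hv lv.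
exists (E j \o fext u v); split.
- apply: hom_comp; [exact: fext_hom | exact: E_hom].
- move=> x y /E_inj; apply: block_inj => //; by rewrite hu lu hv lv.
- have Hp A B : H (piece w A B) = gone.
    rewrite /piece !hH !homV //; apply: piece_gone; exact: Hc.
  move=> x; change (H (fext u v x) = gone).
  apply: (@F2_trivial Q (H \o fext u v)) => [|b].
    by apply: hom_comp; [exact: fext_hom | exact: hH].
  by rewrite /= fext_gen /img /=; case: b; apply: Hp.
Qed.
Lemma embeds_down (N G Q : group) (i : N -> G) (p : G -> Q) :
  short_exact i p -> ~ embeds 1 N -> forall n, embeds n G -> embeds n Q.
Proof.
move=> [hi hp ii ps pk] N1 n [f [hf fi]].
have hpf : is_hom (p \o f) by apply: hom_comp.
exists (p \o f); split => //.
apply: hom_inj => // k hk; apply: NNPP => k1.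
have [phi [hphi iphi Hphi]] := kernel_free hpf hk k1.
apply: N1.
have ex x : exists m, i m = f (phi x).
  by apply/pk; apply: (Hphi x).
pose psi0 x := epsilon (inhabits (gone : N)) (fun m => i m = f (phi x)).
have psiE x : i (psi0 x) = f (phi x) by apply: (epsilon_spec _ _ (ex x)).
exists (fun y : gpower F2 1 => psi0 (y ord0)); split.
  move=> y z; apply: ii; rewrite hi !psiE -hf -hphi //.
move=> y z E; apply: functional_extensionality => m; rewrite (ord1 m).
by apply: iphi; apply: fi; rewrite -!psiE E.
Qed.

Lemma embeds_up_split (G Q : group) (p : G -> Q) :
  split_ext p -> forall n, embeds n Q -> embeds n G.
Proof.
move=> [s [hs ps]] n [g [hg gi]].
exists (s \o g); split; first exact: hom_comp.
by move=> x y /= /(congr1 p); rewrite !ps => /gi.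
Qed.
Section Central.
Variable G : group.
Implicit Types A B Y z W : G.

Definition central z := forall g : G, gmul z g = gmul g z.
Definition conjg Y W := gmul (ginv Y) (gmul W Y).

Lemma central_inv z : central z -> central (ginv z).
Proof.
move=> Hz g; apply: (@gmulI _ z); rewrite gmulVKg gmulA Hz -gmulA gmulgV gmulg1 //.
Qed.

Lemma conj_central z W : central z -> gmul (ginv z) (gmul W z) = W.
Proof. by move=> Hz; rewrite -Hz gmulKg. Qed.

Lemma comm_centr_l A B z : central z -> comm (gmul A z) B = comm A B.
Proof.
move=> Hz; transitivity (gmul (ginv z) (gmul (comm A B) z)); last exact: conj_central.
rewrite /comm ginvM -(gmulA A z B) (Hz B) !gmulA //.
Qed.

Lemma comm_centr_r A B z : central z -> comm A (gmul B z) = comm A B.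
Proof.
move=> Hz; transitivity (gmul (ginv z) (gmul (comm A B) z)); last exact: conj_central.
rewrite /comm ginvM !gmulA -(central_inv Hz (ginv A)) //.
Qed.

Lemma conj_hom Y : is_hom (conjg Y).
Proof. by move=> X X'; rewrite /conjg -!gmulA gmulVKg. Qed.

Lemma conj_commA A Y : gmul A (comm A Y) = conjg Y A.
Proof. by rewrite /comm gmulVKg. Qed.

Lemma comm_comm_central A B Y : central (comm A Y) -> central (comm B Y) ->
  gmul (comm A B) Y = gmul Y (comm A B).
Proof.
move=> hA hB.
have E : conjg Y (comm A B) = comm A B.
  rewrite (hom_comm (@conj_hom Y)) -!conj_commA comm_centr_l // comm_centr_r //.
apply: (@gmulI _ (ginv Y)); rewrite gmulKg; exact: E.
Qed.

Lemma commute_mul A B Y : gmul A Y = gmul Y A -> gmul B Y = gmul Y B ->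
  gmul (gmul A B) Y = gmul Y (gmul A B).
Proof. by move=> hA hB; rewrite -gmulA hB gmulA hA -gmulA. Qed.

Lemma commute_inv A Y : gmul A Y = gmul Y A -> gmul (ginv A) Y = gmul Y (ginv A).
Proof. by move=> h; apply/esym/commV. Qed.

Lemma commute_sym A Y : gmul A Y = gmul Y A -> gmul Y A = gmul A Y.
Proof. by move=> ->. Qed.
End Central.

Section Prod.
Variables (G : group) (T : eqType).
Definition prodl (F : T -> G) (l : seq T) : G :=
  foldr (fun m acc => gmul (F m) acc) gone l.

Lemma prodl_comm (F : T -> G) (Y : G) l :
  (forall b, b \in l -> gmul (F b) Y = gmul Y (F b)) ->
  gmul (prodl F l) Y = gmul Y (prodl F l).
Proof.
elim: l => [|a l IH] H /=; first by rewrite gmul1g gmulg1.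
apply: commute_mul; first by apply: H; rewrite inE eqxx.
by apply: IH => b hb; apply: H; rewrite inE hb orbT.
Qed.

Lemma prodl_mul (X Y : T -> G) l : uniq l ->
  (forall a b, a \in l -> b \in l -> a != b -> gmul (Y a) (X b) = gmul (X b) (Y a)) ->
  prodl (fun m => gmul (X m) (Y m)) l = gmul (prodl X l) (prodl Y l).
Proof.
elim: l => [|a l IH] /=; first by rewrite gmul1g.
case/andP => al ul H.
rewrite IH //; last first.
  by move=> c d hc hd; apply: H; rewrite inE ?hc ?hd orbT.
have Hc : gmul (Y a) (prodl X l) = gmul (prodl X l) (Y a).
  apply/esym/prodl_comm => b hb; apply/esym/H; rewrite ?inE ?eqxx ?hb ?orbT //.
  by apply: contraNneq al => ->.
by rewrite -!gmulA (gmulA (Y a)) Hc -gmulA.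
Qed.
End Prod.

Lemma prodl_hom (G H : group) (f : G -> H) (T : eqType) (F : T -> G) l :
  is_hom f -> f (prodl F l) = prodl (f \o F) l.
Proof.
move=> hf; elim: l => [|a l IH] /=; first exact: hom1.
by rewrite hf IH.
Qed.

Lemma prodl_E n (z : 'I_n -> F2) (l : seq 'I_n) : uniq l ->
  prodl (fun m => E m (z m)) l = (fun c => if c \in l then z c else gone).
Proof.
elim: l => [|a l IH] /=.
  by move=> _; apply: functional_extensionality.
case/andP => al ul; rewrite IH //; apply: functional_extensionality => c.
rewrite /= /pmul /E inE; case: eqP => [->|_] /=.
  by rewrite (negbTE al); exact: (@gmulg1 F2 (z a)).
exact: (gmul1g (_ : F2)).
Qed.
Lemma E_comm n (m m' : 'I_n) (x y : F2) : m != m' -> comm (E m x) (E m' y) = gone.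
Proof.
move=> mm'; apply: functional_extensionality => c.
rewrite /comm /E /= /pmul /pinv.
case: (eqVneq c m) => [cm|cm]; case: (eqVneq c m') => [cm'|cm'] //.
- by move: mm'; rewrite -cm -cm' eqxx.
- exact: (@comm_x1 F2 x).
- exact: (@comm_1x F2 y).
- exact: (@comm_1x F2 gone).
Qed.

Definition uc : F2 := comm (ginv (gen (false, false))) (ginv (gen (true, false))).
Definition vc : F2 := comm (gen (false, false)) (gen (true, false)).

Lemma phic_inj : injective (fext uc vc).
Proof. by apply: block_inj; vm_compute. Qed.

Lemma embeds_up_central (N G Q : group) (i : N -> G) (p : G -> Q) :
  short_exact i p -> central_ext i -> forall n, embeds n Q -> embeds n G.
Proof.
move=> [hi hp ii ps pk] ce n [g [hg gi]].
pose lift q := epsilon (inhabits (gone : G)) (fun y => p y = q).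
have liftE q : p (lift q) = q by apply: (epsilon_spec _ _ (ps q)).
pose lam m := fext (lift (g (E m (gen (false, false))))) (lift (g (E m (gen (true, false))))).
have hlam m : is_hom (lam m) by apply: fext_hom.
have plam m x : p (lam m x) = g (E m x).
  apply: (@hom_agree Q (p \o lam m) (g \o E m)).
  - exact: hom_comp.
  - apply: hom_comp; [exact: E_hom | exact: hg].
  by case=> /=; rewrite /lam fext_gen /img /= liftE.
have cent m m' x y : m != m' -> central (comm (lam m x) (lam m' y)).
  move=> mm'; have : p (comm (lam m x) (lam m' y)) = gone.
    by rewrite (hom_comm hp) !plam -(hom_comm hg) E_comm // hom1.
  by case/pk => nn <- g'; apply: ce.
pose Lam m := lam m \o fext uc vc.
have hLam m : is_hom (Lam m) by apply: hom_comp; [exact: fext_hom | exact: hlam].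
have commL m m' x y : m != m' -> gmul (Lam m x) (Lam m' y) = gmul (Lam m' y) (Lam m x).
  move=> mm'.
  have key a : gmul (Lam m (gen a)) (Lam m' y) = gmul (Lam m' y) (Lam m (gen a)).
    have Cu : gmul (lam m uc) (Lam m' y) = gmul (Lam m' y) (lam m uc).
      rewrite /uc (hom_comm (hlam m)); apply: comm_comm_central; exact: cent.
    have Cv : gmul (lam m vc) (Lam m' y) = gmul (Lam m' y) (lam m vc).
      rewrite /vc (hom_comm (hlam m)); apply: comm_comm_central; exact: cent.
    rewrite /Lam /= fext_gen; case: a => [[] []]; rewrite /img /= ?(homV (hlam m)) //;
      exact: commute_inv.
  elim/F2_ind: x => [|a x IH].
    by rewrite (hom1 (hLam m)) gmul1g gmulg1.
  by rewrite (hLam m); apply: commute_mul.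
pose Psi (x : gpower F2 n) : G := prodl (fun m => Lam m (x m)) (enum 'I_n).
exists Psi; split.
  move=> x y; rewrite /Psi -prodl_mul ?enum_uniq //; last first.
    by move=> a b _ _ ab; apply: commL.
  congr prodl; apply: functional_extensionality => m; exact: (hLam m).
have pPsi x : p (Psi x) = g (fun c => fext uc vc (x c)).
  rewrite /Psi (prodl_hom _ _ hp).
  have -> : (p \o (fun m => Lam m (x m))) = (fun m => g (E m (fext uc vc (x m)))).
    by apply: functional_extensionality => m; rewrite /= plam.
  rewrite -(prodl_hom _ _ hg) prodl_E ?enum_uniq //; congr g.
  by apply: functional_extensionality => c; rewrite mem_enum.
move=> x y /(congr1 p); rewrite !pPsi => /gi E1.
apply: functional_extensionality => c; apply: phic_inj.
exact: (congr1 (fun f => f c) E1).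
Qed.

Theorem proposition2p4 (N G Q : group) (i : N -> G) (p : G -> Q) :
  short_exact i p ->
  nu N = Some 0 ->
  le_enat (nu G) (nu Q) /\
  ((split_ext p \/ central_ext i) -> nu G = nu Q).
Proof.
move=> SE nN.
have N1 : ~ embeds 1 N.
  by have := nuP N; rewrite nN => -[_ H] /H.
split; first exact: (nu_le (embeds_down SE N1)).
move=> H; apply: nu_eq => m; split; first exact: embeds_down SE N1 m.
case: H => [sp|ce]; first exact: (embeds_up_split sp).
exact: embeds_up_central SE ce m.
Qed.
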